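(* Starting from any game state $G$, all game paths starting at $G$ that follow the Split-First Strategy have the same length.
   Context: Fibonacci numbers are indexed by $F_1=1$, $F_2=2$, $F_{i+1}=F_i+F_{i-1}$. A game state is a finite multiset of Fibonacci numbers (tracked by index). The legal moves are: $C_1$: replace $F_1,F_1$ by $F_2$; for $i\ge 2$, $C_i$: replace $F_{i-1},F_i$ by $F_{i+1}$ (a ''combining move''); $S_2$: replace $F_2,F_2$ by $F_1,F_3$; for $i\ge 3$, $S_i$: replace $F_i,F_i$ by $F_{i-2},F_{i+1}$ (a ''splitting move''). Here $C_1$ is grouped with the splitting moves, and ''combining move'' means $C_i$ with $i\ge 2$. Every sequence of legal moves is finite. A game path from a state $G$ is a sequence of legal moves starting at $G$ and continuing until no legal move is available; its length is its number of moves. A game path follows the Split-First Strategy if at each state along it: whenever some splitting move or $C_1$ is available, the move taken is one of those (any choice); otherwise the move taken is the combining move $C_i$ ($i\ge 2$) with the smallest index $i$ among those available. *)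

(* Defs.v *)
From mathcomp Require Import all_boot.
Set Implicit Arguments. Unset Strict Implicit. Unset Printing Implicit Defensive.

(* A game state: multiplicity of F_i for each index i >= 1 (index 0 unused). *)
Definition state := nat -> nat.

Definition valid_state (G : state) : Prop :=
  G 0 = 0 /\ exists N, forall i, N < i -> G i = 0.

Definition addk (j d : nat) (G : state) : state :=
  fun k => if k == j then G k + d else G k.
Definition subk (j d : nat) (G : state) : state :=
  fun k => if k == j then G k - d else G k.

(* Moves: C1 = C_1 ; Comb i = C_i (i >= 2) ; Split i = S_i (i >= 2). *)
Inductive move := C1 | Comb of nat | Split of nat.

Definition legal (m : move) (G : state) : bool :=
  match m with
  | C1 => 2 <= G 1
  | Comb i => (2 <= i) && (1 <= G i.-1) && (1 <= G i)
  | Split i => (2 <= i) && (2 <= G i)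
  end.

Definition apply_move (m : move) (G : state) : state :=
  match m with
  | C1 => addk 2 1 (subk 1 2 G)
  | Comb i => addk i.+1 1 (subk i 1 (subk i.-1 1 G))
  | Split i =>
      if i == 2 then addk 3 1 (addk 1 1 (subk 2 2 G))
      else addk i.+1 1 (addk (i - 2) 1 (subk i 2 G))
  end.

Definition is_splitting (m : move) : bool :=
  match m with C1 | Split _ => true | Comb _ => false end.

Definition terminal (G : state) : Prop := forall m, ~~ legal m G.

Fixpoint game_path (G : state) (ms : seq move) : Prop :=
  match ms with
  | [::] => terminal G
  | m :: ms' => legal m G /\ game_path (apply_move m G) ms'
  end.

Definition split_first_choice (G : state) (m : move) : Prop :=
  ((exists m', is_splitting m' && legal m' G) -> is_splitting m) /\
  (~ (exists m', is_splitting m' && legal m' G) ->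
     exists i, m = Comb i /\ forall j, legal (Comb j) G -> i <= j).

Fixpoint split_first_path (G : state) (ms : seq move) : Prop :=
  match ms with
  | [::] => terminal G
  | m :: ms' => [/\ legal m G, split_first_choice G m &
                   split_first_path (apply_move m G) ms']
  end.

(* Main.v *)
Require Import Defs.
From mathcomp Require Import all_boot zify.
From Stdlib Require Import FunctionalExtensionality.
Set Implicit Arguments.
Unset Strict Implicit.

Ltac crush G := rewrite /addk /subk /=; repeat (let E := fresh "E" in case: eqP => /= E);
  repeat match goal with H : @eq nat ?a ?b |- _ => generalize (f_equal G H); revert H end;
  intros; lia.

Lemma comm_legal a b G : is_splitting a -> is_splitting b -> a <> b ->
  legal a G -> legal b G -> legal b (apply_move a G).
Proof.
case: a => [|i|i] //; case: b => [|j|j] //= _ _ Hne.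
- move=> H /andP[Hj Gj]. rewrite Hj /=. move: Gj. crush G.
- move=> /andP[Hi Gi] H. move: H. case: (i =P 2) => ?; crush G.
- move=> /andP[Hi Gi] /andP[Hj Gj]. rewrite Hj /=.
  have : i <> j by move=> E; apply: Hne; rewrite E.
  move: Gj. case: (i =P 2) => ?; crush G.
Qed.

Lemma comm_apply a b G : is_splitting a -> is_splitting b -> a <> b ->
  legal a G -> legal b G -> apply_move b (apply_move a G) = apply_move a (apply_move b G).
Proof.
move=> Sa Sb Hne La Lb; apply: functional_extensionality => k.
move: Sa Sb Hne La Lb.
case: a => [|i|i] //; case: b => [|j|j] //= _ _ Hne.
- move=> H /andP[Hj Gj]. move: H Gj. case: (j =P 2) => ?; crush G.
- move=> /andP[Hi Gi] H. move: H Gi. case: (i =P 2) => ?; crush G.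
- move=> /andP[Hi Gi] /andP[Hj Gj].
  have : i <> j by move=> E; apply: Hne; rewrite E.
  move: Gi Gj. case: (i =P 2) => ?; case: (j =P 2) => ?; crush G.
Qed.

From Stdlib Require Import Classical.

Lemma split_choice G m : is_splitting m -> legal m G -> split_first_choice G m.
Proof.
move=> S L; split=> // H; exfalso; apply: H; exists m; by rewrite S L.
Qed.

Lemma choice_split G m1 m2 : legal m1 G -> legal m2 G ->
  split_first_choice G m1 -> split_first_choice G m2 -> m1 <> m2 ->
  is_splitting m1 /\ is_splitting m2.
Proof.
move=> L1 L2 [A1 B1] [A2 B2] Hne.
case: (classic (exists m', is_splitting m' && legal m' G)) => H.
  by split; [apply: A1|apply: A2].
case: (B1 H) => i [E1 Hi]; case: (B2 H) => j [E2 Hj]; subst.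
exfalso; apply: Hne; have := Hi j L2; have := Hj i L1.
by move=> a b; have -> : i = j by lia.
Qed.

Lemma diamond n : forall G ms, size ms = n.+1 -> split_first_path G ms ->
  forall m, legal m G -> split_first_choice G m ->
  exists ms', split_first_path (apply_move m G) ms' /\ size ms' = n.
Proof.
elim: n => [|n IH] G [|m1 t] //= [Hs] [L1 C1' P1] m L C.
- case: (classic (m = m1)) => [->|Hne]; first by exists t; split.
  have [S1 S] := choice_split L1 L C1' C (nesym Hne).
  move: Hs P1; case: t => //= _ T.
  by have := T m; rewrite (comm_legal S1 S (nesym Hne) L1 L).
- case: (classic (m = m1)) => [->|Hne]; first by exists t; split.
  have [S1 S] := choice_split L1 L C1' C (nesym Hne).
  have Lm := comm_legal S1 S (nesym Hne) L1 L.
  have [p [Pp Sp]] := IH _ _ Hs P1 m Lm (split_choice S Lm).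
  have Lm1 := comm_legal S S1 Hne L L1.
  exists (m1 :: p); split; last by rewrite /= Sp.
  split => //; first exact: split_choice.
  by rewrite (comm_apply S S1 Hne L L1).
Qed.

Theorem lemma2p2 (G : state) (ms1 ms2 : seq move) :
  valid_state G ->
  split_first_path G ms1 -> split_first_path G ms2 ->
  size ms1 = size ms2.
Proof.
move=> _; move: {2}(size ms1) (erefl (size ms1)) => n.
elim: n G ms1 ms2 => [|n IH] G [|m1 t1] [|m2 t2] //=.
- by move=> _ T [L2 _ _]; have := T m2; rewrite L2.
- by move=> _ [L1 _ _] T; have := T m1; rewrite L1.
- move=> [Hs] P1 [L2 C2 P2].
  have [p [Pp Sp]] := @diamond n G (m1 :: t1) (congr1 succn Hs) P1 m2 L2 C2.
  by rewrite Hs -(IH _ p t2 Sp Pp P2) Sp.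
Qed.
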